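(* Let $\mathscr{H}^a,\mathscr{H}^b,\mathscr{H}^c$ be nonzero finite-dimensional Hilbert spaces, with identity operators $\hat I^a,\hat I^b,\hat I^c$. Let $\hat Q^a$ be an operator on $\mathscr{H}^a$, $\hat Q^c$ an operator on $\mathscr{H}^c$, $\hat Q^{ab}$ an operator on $\mathscr{H}^a\otimes\mathscr{H}^b$, and $\hat Q^{bc}$ an operator on $\mathscr{H}^b\otimes\mathscr{H}^c$. Suppose that, as operators on $\mathscr{H}^a\otimes\mathscr{H}^b\otimes\mathscr{H}^c$, $$\hat Q^a\otimes\hat I^b\otimes\hat I^c+\hat I^a\otimes\hat Q^{bc}=\hat Q^{ab}\otimes\hat I^c+\hat I^a\otimes\hat I^b\otimes\hat Q^c .$$ Then there exists a unique operator $\hat Q^b$ on $\mathscr{H}^b$ such that simultaneously $$\hat Q^{bc}=\hat Q^b\otimes\hat I^c+\hat I^b\otimes\hat Q^c\qquad\text{and}\qquad \hat Q^{ab}=\hat Q^a\otimes\hat I^b+\hat I^a\otimes\hat Q^b .$$ *)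

(* Defs.v *)
(* Operators on finite-dimensional complex Hilbert spaces
   H^a, H^b, H^c of dimensions na, nb, nc are square matrices over the
   complex numbers R[i] (R a real closed field, e.g. the reals); the tensor
   product of operators is the Kronecker product tensmx (from real_closed). *)
From mathcomp Require Import all_boot all_algebra.
From mathcomp Require Export complex mxtens.
Set Implicit Arguments. Unset Strict Implicit. Unset Printing Implicit Defensive.
Import GRing.Theory.
Local Open Scope ring_scope.

(* Canonical identification H^a (x) (H^b (x) H^c) = (H^a (x) H^b) (x) H^c:
   reinterpret an operator on a*(b*c) as one on (a*b)*c. *)
Definition assocmx (K : Type) (na nb nc : nat)
  (M : 'M[K]_(na * (nb * nc))) : 'M[K]_(na * nb * nc) :=
  castmx (mulnA na nb nc, mulnA na nb nc) M.

(* Main.v *)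
Require Import Defs.
From mathcomp Require Import all_boot all_algebra.
From mathcomp Require Import complex mxtens.
From mathcomp Require Import ring.
Import GRing.Theory.
Local Open Scope ring_scope.

Lemma idx_assoc na nb nc (a : 'I_na) (b : 'I_nb) (c : 'I_nc) :
  cast_ord (esym (mulnA na nb nc)) (mxtens_index (mxtens_index (a,b), c))
  = mxtens_index (a, mxtens_index (b,c)).
Proof. apply: val_inj => /=. rewrite mulnDl -mulnA -addnA. by []. Qed.

Lemma entry (R : rcfType) (na nb nc : nat)
  (Qa : 'M[R[i]]_na) (Qc : 'M[R[i]]_nc)
  (Qab : 'M[R[i]]_(na * nb)) (Qbc : 'M[R[i]]_(nb * nc)) :
  tensmx (tensmx Qa (1%:M : 'M[R[i]]_nb)) (1%:M : 'M[R[i]]_nc)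
    + assocmx (tensmx (1%:M : 'M[R[i]]_na) Qbc)
  = tensmx Qab (1%:M : 'M[R[i]]_nc)
    + tensmx (tensmx (1%:M : 'M[R[i]]_na) (1%:M : 'M[R[i]]_nb)) Qc ->
  forall a a' b b' c c',
  Qa a a' * (1 *+ (b == b')) * (1 *+ (c == c')) + (1 *+ (a == a')) * Qbc (mxtens_index (b,c)) (mxtens_index (b',c'))
  = Qab (mxtens_index (a,b)) (mxtens_index (a',b')) * (1 *+ (c == c')) + (1 *+ (a == a')) * (1 *+ (b == b')) * Qc c c'.
Proof.
move=> H a a' b b' c c'.
move/matrixP: H => /(_ (mxtens_index (mxtens_index (a,b), c)) (mxtens_index (mxtens_index (a',b'), c'))).
rewrite !mxE castmxE !idx_assoc !mxtens_indexK /= ?mxE !mxtens_indexK /=.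
by [].
Qed.

Theorem proposition1 (R : rcfType) (na nb nc : nat)
  (Hna : (0 < na)%N) (Hnb : (0 < nb)%N) (Hnc : (0 < nc)%N)
  (Qa : 'M[R[i]]_na) (Qc : 'M[R[i]]_nc)
  (Qab : 'M[R[i]]_(na * nb)) (Qbc : 'M[R[i]]_(nb * nc)) :
  tensmx (tensmx Qa (1%:M : 'M[R[i]]_nb)) (1%:M : 'M[R[i]]_nc)
    + assocmx (tensmx (1%:M : 'M[R[i]]_na) Qbc)
  = tensmx Qab (1%:M : 'M[R[i]]_nc)
    + tensmx (tensmx (1%:M : 'M[R[i]]_na) (1%:M : 'M[R[i]]_nb)) Qc ->
  exists! Qb : 'M[R[i]]_nb,
    Qbc = tensmx Qb (1%:M : 'M[R[i]]_nc) + tensmx (1%:M : 'M[R[i]]_nb) Qc /\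
    Qab = tensmx Qa (1%:M : 'M[R[i]]_nb) + tensmx (1%:M : 'M[R[i]]_na) Qb.
Proof.
move=> H; have E := @entry _ _ _ _ _ _ _ _ H.
pose a0 : 'I_na := Ordinal Hna; pose c0 : 'I_nc := Ordinal Hnc.
exists (\matrix_(b, b') (Qab (mxtens_index (a0,b)) (mxtens_index (a0,b'))
                        - Qa a0 a0 * (1 *+ (b == b')))).
split.
  split.
    apply/matrixP => i j; case: (mxtens_indexP i) => b c; case: (mxtens_indexP j) => b' c'.
    rewrite !mxE !mxtens_indexK /= ?mxE.
    have := E a0 a0 b b' c c'; rewrite eqxx mulr1n mul1r => e.
    apply: (addrI (Qa a0 a0 * (1 *+ (b == b')) * (1 *+ (c == c')))); rewrite e.
    ring.
  apply/matrixP => i j; case: (mxtens_indexP i) => a b; case: (mxtens_indexP j) => a' b'.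
  rewrite !mxE !mxtens_indexK /= ?mxE.
  have := E a0 a0 b b' c0 c0; rewrite !eqxx !mulr1n !mul1r !mulr1 => e2.
  have := E a a' b b' c0 c0; rewrite !eqxx !mulr1n !mulr1 => e1.
  case: (eqVneq a a') e1 => [<-|_]; rewrite ?eqxx ?mulr1n ?mulr0n ?mul1r ?mul0r ?addr0 => e1.
    have e3 : Qbc (mxtens_index (b, c0)) (mxtens_index (b', c0)) =
      Qab (mxtens_index (a0, b)) (mxtens_index (a0, b')) + (1 *+ (b == b')) * Qc c0 c0
      - Qa a0 a0 * (1 *+ (b == b')).
      apply: (addrI (Qa a0 a0 * (1 *+ (b == b')))); rewrite e2; ring.
    rewrite e3 in e1.
    apply: (addIr ((1 *+ (b == b')) * Qc c0 c0)); rewrite -e1; ring.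
  by rewrite e1.
move=> Qb' [_ h]; apply/matrixP => b b'.
move/matrixP: h => /(_ (mxtens_index (a0,b)) (mxtens_index (a0,b'))).
rewrite !mxE !mxtens_indexK /= ?mxE ?eqxx ?mulr1n mul1r => ->.
ring.
Qed.
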